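(* For every matroid $M$, the Borsuk number of $M$ equals the Borsuk number of its matroid polytope: $f(M)=f(P_M)$.
   Context: For a matroid $M$ on ground set $E$, $\mathcal{B}(M)$ denotes its set of bases, and the distance between two bases $B,B'$ is $|B\triangle B'|$; $\operatorname{diam}$ denotes diameter. The Borsuk number $f(M)$ is the minimum number of parts in a partition of $\mathcal{B}(M)$ in which every part has diameter strictly smaller than $\operatorname{diam}(\mathcal{B}(M))$; if $M$ has exactly one basis, $f(M):=+\infty$. For $S\subseteq E$, $\chi^S\in\{0,1\}^E$ is its indicator vector. The matroid polytope $P_M\subset\mathbb{R}^E$ is the convex hull of $\{\chi^B: B\in\mathcal{B}(M)\}$. For a bounded set $S$ in Euclidean space, $f(S)$ is the minimum number of parts in a partition of $S$ into parts of Euclidean diameter strictly smaller than that of $S$ ($+\infty$ if none exists). *)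

(* Defs.v *)
From HB Require Import structures.
From mathcomp Require Import all_boot all_order all_algebra.
From mathcomp Require Import boolp classical_sets reals.
Set Implicit Arguments. Unset Strict Implicit. Unset Printing Implicit Defensive.
Import Order.TTheory GRing.Theory Num.Theory.

Lemma ex_asbool_nat (P : nat -> Prop) :
  (exists k, P k) -> exists k, (fun k => `[< P k >]) k.
Proof. by move=> [k Pk]; exists k; apply/asboolP. Qed.

(* least k with P k, or None (= +oo) if there is no such k *)
Definition ext_min (P : nat -> Prop) : option nat :=
  match pselect (exists k, P k) with
  | left h => Some (ex_minn (ex_asbool_nat h))
  | right _ => None
  end.

Definition symdiff (E : finType) (A B : {set E}) : {set E} :=
  (A :\: B) :|: (B :\: A).

Definition is_matroid_bases (E : finType) (Bs : {set {set E}}) : Prop :=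
  (exists B, B \in Bs) /\
  forall B1 B2, B1 \in Bs -> B2 \in Bs -> forall x, x \in B1 :\: B2 ->
    exists2 y, y \in B2 :\: B1 & (y |: (B1 :\ x)) \in Bs.

Definition bdiam (E : finType) (F : {set {set E}}) : nat :=
  \max_(B in F) \max_(B' in F) #|symdiff B B'|.

(* partition of the bases into k parts (fibres of a labelling c; empty parts
   are harmless for the minimum) each of diameter < diam *)
Definition matroid_borsuk_feasible (E : finType) (Bs : {set {set E}}) (k : nat) : Prop :=
  exists c : {set E} -> 'I_k,
    forall i : 'I_k, (bdiam [set B in Bs | c B == i] < bdiam Bs)%N.

(* Borsuk number f(M); +oo (None) when no partition exists, e.g. one basis *)
Definition matroid_borsuk (E : finType) (Bs : {set {set E}}) : option nat :=
  ext_min (matroid_borsuk_feasible Bs).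

Local Open Scope ring_scope.
Local Open Scope classical_set_scope.

Definition edist (R : realType) (E : finType) (x y : E -> R) : R :=
  Num.sqrt (\sum_(e : E) (x e - y e) ^+ 2).

(* Euclidean diameter (supremum of distances; sup set0 = 0) *)
Definition ediam (R : realType) (E : finType) (S : set (E -> R)) : R :=
  sup [set d | exists x y, [/\ S x, S y & d = edist x y]].

Definition set_borsuk_feasible (R : realType) (E : finType) (S : set (E -> R)) (k : nat)
  : Prop :=
  exists c : (E -> R) -> 'I_k,
    forall i : 'I_k, ediam [set x | S x /\ c x = i] < ediam S.

Definition set_borsuk (R : realType) (E : finType) (S : set (E -> R)) : option nat :=
  ext_min (set_borsuk_feasible S).

Definition indic (R : realType) (E : finType) (S : {set E}) : E -> R :=
  fun e => if e \in S then 1 else 0.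

Definition matroid_polytope (R : realType) (E : finType) (Bs : {set {set E}})
  : set (E -> R) :=
  [set x | exists lam : {set E} -> R,
     [/\ (forall B, 0 <= lam B),
         \sum_(B in Bs) lam B = 1 &
         x = (fun e => \sum_(B in Bs) lam B * indic R B e)]].

(* Main.v *)
Require Import Defs.
From mathcomp Require Import all_boot all_order all_algebra.
From mathcomp Require Import boolp classical_sets reals.
Set Implicit Arguments. Unset Strict Implicit. Unset Printing Implicit Defensive.
Import Order.TTheory GRing.Theory Num.Theory.
Local Open Scope ring_scope.

Section S.
Variables (R : realType) (E : finType) (Bs : {set {set E}}).

Definition rep (x : E -> R) (lam : {set E} -> R) :=
  [/\ (forall B, 0 <= lam B), \sum_(B in Bs) lam B = 1 &
      x = (fun e => \sum_(B in Bs) lam B * indic R B e)].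

Lemma absdiff (B B' : {set E}) e :
  `|indic R B e - indic R B' e| = (e \in symdiff B B')%:R.
Proof.
rewrite /indic /symdiff !inE; case: (e \in B); case: (e \in B') => /=;
  by rewrite ?subrr ?subr0 ?sub0r ?normrN ?normr0 ?normr1.
Qed.

Lemma sum_absdiff (B B' : {set E}) :
  \sum_e `|indic R B e - indic R B' e| = #|symdiff B B'|%:R.
Proof.
under eq_bigr do rewrite absdiff.
rewrite -natr_sum -sum1_card big_mkcond /=; congr (_%:R).
rewrite unlock /=; elim: (index_enum E) => //= a s ->; by case: (a \in _).
Qed.

Lemma key x y lam mu : rep x lam -> rep y mu ->
  \sum_e (x e - y e) ^+ 2 <=
  \sum_(B in Bs) \sum_(B' in Bs) lam B * mu B' * #|symdiff B B'|%:R.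
Proof.
move=> [l0 l1 ->] [m0 m1 ->].
pose t e := \sum_(B in Bs) \sum_(B' in Bs) lam B * mu B' * `|indic R B e - indic R B' e|.
have h1 e : \sum_(B in Bs) lam B * indic R B e - \sum_(B in Bs) mu B * indic R B e
   = \sum_(B in Bs) \sum_(B' in Bs) lam B * mu B' * (indic R B e - indic R B' e).
  transitivity (\sum_(B in Bs) lam B * (indic R B e - \sum_(B' in Bs) mu B' * indic R B' e)).
    under [RHS]eq_bigr do rewrite mulrBr.
    by rewrite sumrB -big_distrl /= l1 mul1r.
  apply: eq_bigr => B _.
  rewrite -[in LHS](mul1r (indic R B e)) -m1 big_distrl /= -sumrB big_distrr /=.
  by apply: eq_bigr => B' _; rewrite mulrBr mulrBr !mulrA.
have t0 e : 0 <= t e by apply: sumr_ge0 => B _; apply: sumr_ge0 => B' _;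
  rewrite mulr_ge0 // mulr_ge0.
have h2 e : `|\sum_(B in Bs) lam B * indic R B e - \sum_(B in Bs) mu B * indic R B e| <= t e.
  rewrite h1; apply: (le_trans (ler_norm_sum _ _ _)); apply: ler_sum => B _.
  apply: (le_trans (ler_norm_sum _ _ _)); apply: ler_sum => B' _.
  by rewrite normrM (ger0_norm (mulr_ge0 (l0 B) (m0 B'))).
have h3 e : t e <= 1.
  rewrite -l1; apply: ler_sum => B _; rewrite -[X in _ <= X]mulr1 -m1 big_distrr /=.
  apply: ler_sum => B' _; rewrite -mulrA ler_wpM2l // ler_piMr //.
  by rewrite absdiff; case: (_ \in _).
apply: le_trans (_ : \sum_e t e <= _).
  apply: ler_sum => e _.
  rewrite -[_ ^+ 2]ger0_norm ?sqr_ge0 // normrX expr2.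
  apply: (@le_trans _ _ (t e * t e)); first by apply: ler_pM.
  by rewrite -[X in _ <= X]mulr1 ler_wpM2l.
rewrite /t exchange_big /=; apply: ler_sum => B _.
rewrite exchange_big /=; apply: ler_sum => B' _.
by rewrite -big_distrr /= sum_absdiff.
Qed.

Local Open Scope classical_set_scope.
Definition DS (S : set (E -> R)) : set R :=
  [set d | exists x y, [/\ S x, S y & d = edist x y]].
Let d := bdiam Bs.
Let P := @matroid_polytope R E Bs.

Lemma sym_le_d B B' : B \in Bs -> B' \in Bs -> (#|symdiff B B'| <= d)%N.
Proof.
move=> hB hB'; apply: leq_trans (leq_bigmax_cond B hB).
exact: (leq_bigmax_cond (F := fun B' => #|symdiff B B'|) B' hB').
Qed.

Lemma vert_P B : B \in Bs -> P (indic R B).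
Proof.
move=> hB; exists (fun B' => (B' == B)%:R); split.
- by move=> B'; case: (_ == _).
- by rewrite (bigD1 B) //= eqxx big1 ?addr0 // => B' /andP[_ /negbTE ->].
- apply: funext => e; rewrite (bigD1 B) //= eqxx mul1r big1 ?addr0 //.
  by move=> B' /andP[_ /negbTE ->]; rewrite mul0r.
Qed.

Lemma edist_vert (B B' : {set E}) : edist (indic R B) (indic R B') = Num.sqrt (#|symdiff B B'|%:R).
Proof.
rewrite /edist -sum_absdiff; congr Num.sqrt; apply: eq_bigr => e _.
rewrite -[_ ^+ 2]ger0_norm ?sqr_ge0 // normrX absdiff.
by case: (_ \in _); rewrite ?expr1n ?expr0n.
Qed.

Lemma dsplit (c : R) lam mu : \sum_(B in Bs) lam B = 1 -> \sum_(B in Bs) mu B = 1 ->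
  c = \sum_(B in Bs) \sum_(B' in Bs) lam B * mu B' * c.
Proof.
move=> l1 m1.
transitivity (\sum_(B in Bs) lam B * c); first by rewrite -big_distrl /= l1 mul1r.
apply: eq_bigr => B _.
by rewrite -{1}[lam B]mulr1 -m1 big_distrr big_distrl /=; apply: eq_bigr => B' _.
Qed.

Lemma rep_bound x y lam mu : rep x lam -> rep y mu ->
  \sum_e (x e - y e) ^+ 2 <= d%:R.
Proof.
move=> rx ry; apply: (le_trans (key rx ry)).
case: rx => l0 l1 _; case: ry => m0 m1 _.
rewrite [X in _ <= X](dsplit _ l1 m1); apply: ler_sum => B hB.
apply: ler_sum => B' hB'.
rewrite ler_wpM2l ?mulr_ge0 // ler_nat; exact: sym_le_d.
Qed.

Lemma sum_ge_term (A : {set {set E}}) (F : {set E} -> R) i0 :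
  i0 \in A -> (forall i, i \in A -> 0 <= F i) -> F i0 <= \sum_(i in A) F i.
Proof.
by move=> h F0; rewrite (bigD1 i0) //= lerDl sumr_ge0 // => i /andP[/F0].
Qed.

Lemma rep_strict x y lam mu B0 B1 : rep x lam -> rep y mu ->
  B0 \in Bs -> B1 \in Bs -> (#|symdiff B0 B1| < d)%N ->
  \sum_e (x e - y e) ^+ 2 <= d%:R - lam B0 * mu B1.
Proof.
move=> rx ry h0 h1 hlt; apply: (le_trans (key rx ry)).
case: rx => l0 l1 _; case: ry => m0 m1 _.
rewrite lerBrDr.
rewrite [X in _ <= X](dsplit _ l1 m1).
rewrite -lerBrDl -sumrB.
under eq_bigr do rewrite -sumrB.
apply: (le_trans _ (sum_ge_term (F := fun B => \sum_(B' in Bs) (lam B * mu B' * d%:R -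
    lam B * mu B' * #|symdiff B B'|%:R)) h0 _)); last first.
  move=> B hB; apply: sumr_ge0 => B' hB'.
  by rewrite subr_ge0 ler_wpM2l ?mulr_ge0 // ler_nat sym_le_d.
apply: (le_trans _ (sum_ge_term (F := fun B' => (lam B0 * mu B' * d%:R -
    lam B0 * mu B' * #|symdiff B0 B'|%:R)) h1 _)); last first.
  by move=> B' hB'; rewrite subr_ge0 ler_wpM2l ?mulr_ge0 // ler_nat sym_le_d.
rewrite -mulrBr ler_peMr ?mulr_ge0 //.
by rewrite lerBrDr -[1]/(1%:R) -natrD ler_nat add1n.
Qed.

Lemma P_rep x : P x -> exists lam, rep x lam.
Proof. by []. Qed.

Lemma DS_ub S : S `<=` P -> ubound (DS S) (Num.sqrt d%:R).
Proof.
move=> SP z [x [y [Sx Sy ->]]].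
case: (SP x Sx) => lam rx; case: (SP y Sy) => mu ry.
by rewrite /edist ler_sqrt // (rep_bound rx ry).
Qed.

Lemma DS_hub S : S `<=` P -> has_ubound (DS S).
Proof. by move=> SP; exists (Num.sqrt d%:R); apply: DS_ub. Qed.

Lemma exists_max : (exists B, B \in Bs) ->
  exists B B', [/\ B \in Bs, B' \in Bs & #|symdiff B B'| = d].
Proof.
move=> [B0 h0].
have c0 : (0 < #|mem Bs|)%N by apply/card_gt0P; exists B0.
case: (eq_bigmax_cond (fun B => \max_(B' in Bs) #|symdiff B B'|) c0) => B hB e1.
case: (eq_bigmax_cond (fun B' => #|symdiff B B'|) c0) => B' hB' e2.
by exists B, B'; split => //; rewrite /d /bdiam e1 e2.
Qed.

Lemma ediamP_ge : (exists B, B \in Bs) -> Num.sqrt d%:R <= ediam P.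
Proof.
move=> /exists_max [B [B' [hB hB' e]]].
apply: (ub_le_sup (DS_hub (@subset_refl _ P))).
by exists (indic R B), (indic R B'); split; [exact: vert_P | exact: vert_P | rewrite edist_vert e].
Qed.

Lemma ediamP_le : (exists B, B \in Bs) -> ediam P <= Num.sqrt d%:R.
Proof.
move=> [B hB]; apply: ge_sup; last exact: DS_ub.
by exists (edist (indic R B) (indic R B)), (indic R B), (indic R B); split => //; exact: vert_P.
Qed.

Lemma dir2 k : (exists B, B \in Bs) -> set_borsuk_feasible P k ->
  matroid_borsuk_feasible Bs k.
Proof.
move=> ne [cP H]; exists (fun B => cP (indic R B)) => i.
have Sub j : [set x | P x /\ cP x = j] `<=` P by move=> x [].
have dpos : (0 < d)%N.
  case: (ne) => B0 h0.
  have hlt := H (cP (indic R B0)).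
  have h0' : 0 <= ediam [set x | P x /\ cP x = cP (indic R B0)].
    apply: (le_trans (sqrtr_ge0 (\sum_e (indic R B0 e - indic R B0 e) ^+ 2))).
    apply: (ub_le_sup (DS_hub (Sub _))).
    by exists (indic R B0), (indic R B0); split => //; split => //; exact: vert_P.
  have := lt_le_trans (le_lt_trans h0' hlt) (ediamP_le ne).
  rewrite lt0n; apply: contraTN => /eqP d0; by rewrite d0 sqrtr0 ltxx.
have hpair B B' : B \in [set B in Bs | cP (indic R B) == i] ->
    B' \in [set B in Bs | cP (indic R B) == i] -> (#|symdiff B B'| < d)%N.
  rewrite !inE => /andP[hB /eqP cB] /andP[hB' /eqP cB'].
  have lt : Num.sqrt (#|symdiff B B'|%:R) < Num.sqrt (d%:R : R).
    rewrite -edist_vert; apply: lt_le_trans (ediamP_le ne).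
    apply: le_lt_trans (H i).
    apply: (ub_le_sup (DS_hub (Sub _))).
    by exists (indic R B), (indic R B'); split => //; split => //; exact: vert_P.
  by rewrite ltr_sqrt ?ltr0n // ltr_nat in lt.
rewrite -/d -(prednK dpos) ltnS; apply/bigmax_leqP => B hB; apply/bigmax_leqP => B' hB'.
by rewrite -ltnS prednK //; apply: hpair.
Qed.

Lemma dir1 k : (exists B, B \in Bs) -> matroid_borsuk_feasible Bs k ->
  set_borsuk_feasible P k.
Proof.
move=> ne [cM H].
pose N := #|Bs|.
have Npos : 0 < (N%:R : R).
  rewrite ltr0n; case: ne => B hB; apply/card_gt0P; by exists B.
pose good x B := B \in Bs /\ exists lam, rep x lam /\ N%:R^-1 <= lam B.
have ex_good x : P x -> exists B, good x B.
  move=> [lam rx]; case: (pselect (exists B, good x B)) => // nex; exfalso.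
  have all B : B \in Bs -> lam B < N%:R^-1.
    move=> hB; rewrite ltNge; apply/negP => hle; apply: nex; exists B; split => //.
    by exists lam.
  case: (rx) => _ l1 _.
  have : \sum_(B in Bs) lam B < \sum_(B in Bs) (N%:R^-1 : R).
    apply: ltr_sum => //; case: ne => B hB; apply/hasP; by exists B.
  by rewrite l1 sumr_const -/N -[_ *+ N]mulr_natr mulVf ?ltxx // gt_eqF.
pose cP x := match pselect (exists B, good x B) with
  | left h => cM (proj1_sig (cid h)) | right _ => cM finset.set0 end.
have cPspec x : P x -> exists B lam,
    [/\ B \in Bs, rep x lam, N%:R^-1 <= lam B & cP x = cM B].
  move=> Px; rewrite /cP; case: pselect => [h|nh]; last first.
    by exfalso; apply: nh; apply: ex_good.
  by case: (cid h) => B /= [hB [lam [rx hl]]]; exists B, lam.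
exists cP => i.
have dpos : (0 < d)%N by apply: leq_ltn_trans (leq0n _) (H (cM finset.set0)).
pose q := (N%:R^-1 * N%:R^-1 : R).
have qpos : 0 < q by rewrite mulr_gt0 // invr_gt0.
apply: (@le_lt_trans _ _ (Num.sqrt (d%:R - q))); last first.
  apply: lt_le_trans (ediamP_ge ne).
  by rewrite ltr_sqrt ?ltr0n // ltrBlDr ltrDl.
change (sup (DS [set x | P x /\ cP x = i]) <= Num.sqrt (d%:R - q)); case: (pselect (DS [set x | P x /\ cP x = i] !=set0)) => [ne'|e].
  apply: ge_sup => // z [x [y [[Px cx] [Py cy] ->]]].
  case: (cPspec x Px) => B0 [lam [h0 rx l0 e0]].
  case: (cPspec y Py) => B1 [mu [h1 ry m0 e1]].
  have hlt : (#|symdiff B0 B1| < d)%N.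
    apply: leq_ltn_trans (H i).
    apply: leq_trans (leq_bigmax_cond B0 _); last by rewrite inE h0 -e0 cx eqxx.
    apply: (leq_bigmax_cond (F := fun B' => #|symdiff B0 B'|) B1).
    by rewrite inE h1 -e1 cy eqxx.
  have hs := rep_strict rx ry h0 h1 hlt.
  have lq : q <= lam B0 * mu B1 by apply: ler_pM; rewrite // invr_ge0 ltW.
  have hs' : \sum_e (x e - y e) ^+ 2 <= d%:R - q.
    by apply: (le_trans hs); rewrite lerD2l lerN2.
  rewrite /edist ler_sqrt //; apply: le_trans hs'.
  by apply: sumr_ge0 => e _; apply: sqr_ge0.
suff -> : DS [set x | P x /\ cP x = i] = set0 by rewrite sup0 sqrtr_ge0.
apply/seteqP; split => z // hz; exfalso; apply: e; by exists z.
Qed.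
End S.

Theorem proposition2p2 (R : realType) (E : finType) (Bs : {set {set E}}) :
  is_matroid_bases Bs ->
  matroid_borsuk Bs = set_borsuk (@matroid_polytope R E Bs).
Proof.
move=> [ne _]; rewrite /matroid_borsuk /set_borsuk; congr ext_min.
apply: funext => k; apply: propext; split; [exact: dir1 | exact: dir2].
Qed.
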